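(* Let $\langle\mathcal{D},\sigma,\varphi\rangle$ be a hybrid temporal achievement causal setting. Then $$\mathcal{D}\models\mathit{CausesDir}^{\mathit{prim}}_{\mathit{temp}}(a,ts,\varphi,\sigma)\land\sigma\le s^*\land\big(\forall s',t'.\;\sigma\le s'\le s^*\land\mathit{start}(s')\le t'\le\mathit{end}(s',s^* )\supset\varphi[t',s']\big)\supset\mathit{CausesDir}^{\mathit{prim}}_{\mathit{temp}}(a,ts,\varphi,s^* )$$ (free variables $a,ts,s^*$ universally quantified).
   Context: Hybrid temporal situation calculus (HTSC): $S_0$ initial situation, $do(a,s)$ successor situation, $do([a_1,\dots,a_n],s)$ the nesting. $s\sqsubset s'$: $s'$ reachable from $s$ by one or more actions; $s\sqsubseteq s'$: $s\sqsubset s'\lor s=s'$. $\mathit{time}(a(\vec x,t))=t$, $\mathit{start}(do(a,s))=\mathit{time}(a)$. $\mathit{Exec}(s)\doteq\forall a,s'.(do(a,s')\sqsubseteq s\supset\mathit{Poss}(a,s')\land\mathit{start}(s')\le\mathit{time}(a))$; $s<s'$ abbreviates $s\sqsubset s'\land\mathit{Exec}(s')$; $s\le s'$ abbreviates $s<s'\lor s=s'$. $\mathit{timeStamp}(S_0)=0$, $\mathit{timeStamp}(do(a,s))=\mathit{timeStamp}(s)+1$. A hybrid basic action theory $\mathcal{D}$ contains initial-state, precondition, successor-state (discrete fluents), state evolution (temporal fluents), unique-names and foundational axioms. A temporal fluent $f$ has state evolution axiom $f(\vec x,t,s)=y\equiv[\bigvee_i(\gamma^f_i(\vec x,s)\land\delta_i(\vec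 x,y,t,s))\lor(y=f(\vec x,\mathit{start}(s),s)\land\neg\bigvee_i\gamma^f_i(\vec x,s))]$ with mutually exclusive contexts $\gamma^f_i$ (formulas over discrete fluents). An effect $\varphi$ is a situation- and time-suppressed formula, uniform in the situation, constraining the value of one primitive temporal fluent $f$; $\varphi[t,s]$ restores time $t$ and situation $s$; $\psi[s]$ restores $s$ in a situation-suppressed $\psi$. $\mathit{CausesDir}(a,ts,\psi,s)\doteq\exists s_a.\,\mathit{timeStamp}(s_a)=ts\land(S_0<do(a,s_a)\le s)\land\neg\psi[s_a]\land\forall s'.(do(a,s_a)\le s'\le s\supset\psi[s'])$. $\mathit{end}(s',s)=\mathit{start}(s')$ if $s'=s$; $=\mathit{time}(a)$ if $do(a,s')\le s$. $\mathit{AchvSitAux}(s_\varphi,\varphi,s)\doteq\varphi[\mathit{end}(s_\varphi,s),s_\varphi]\land\forall s',t.(s_\varphi<s'\le s\land\mathit{start}(s')\le t\le\mathit{end}(s',s)\supset\varphi[t,s'])$; $\mathit{AchvSit}(s_\varphi,\varphi,s)\doteq\mathit{AchvSitAux}(s_\varphi,\varphi,s)\land\neg\exists s''.(s''<s_\varphi\land\mathit{AchvSitAux}(s'',\varphi,s))$. $\mathit{CausesDir}^{\mathit{prim}}_{\mathit{temp}}(a,ts,\varphi,s)\doteq\exists s_\varphi.\,\mathit{AchvSit}(s_\varphi,\varphi,s)\land\exists i.\,\mathit{CausesDir}(a,ts,\gamma^f_i,s_\varphi)$. Hybrid temporal achievement causal setting $\langle\mathcal{D},\sigma,\varphi\rangle$: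 $\sigma=do([\alpha_1,\dots,\alpha_n],S_0)$ ground, $n\ge1$, $\mathcal{D}\models\mathit{Exec}(\sigma)\land\neg\varphi[\mathit{start}(S_0),S_0]\land\neg\varphi[\mathit{time}(\alpha_1),S_0]\land\varphi[\mathit{start}(\sigma),\sigma]$. *)

(* Defs.v *)
From Stdlib Require Import Reals List.
Import ListNotations.
Open Scope R_scope.

(* By the foundational axioms of the situation calculus, the situations of any
   model form the tree of finite action sequences rooted at S0.  We therefore
   represent a situation as a list of actions, most recent action first:
   S0 = [], do(a,s) = a :: s. *)

Definition S0 {Act : Type} : list Act := [].
Definition do {Act : Type} (a : Act) (s : list Act) : list Act := a :: s.

Fixpoint do_seq {Act : Type} (l : list Act) (s : list Act) : list Act :=
  match l with
  | [] => s
  | a :: l' => do_seq l' (do a s)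
  end.

Inductive sqsub {Act : Type} : list Act -> list Act -> Prop :=
| sqsub_do : forall a s, sqsub s (do a s)
| sqsub_step : forall a s s', sqsub s s' -> sqsub s (do a s').

Definition sqsubeq {Act : Type} (s s' : list Act) : Prop := sqsub s s' \/ s = s'.

Definition start {Act : Type} (time : Act -> R) (start0 : R) (s : list Act) : R :=
  match s with
  | [] => start0
  | a :: _ => time a
  end.

Definition timeStamp {Act : Type} (s : list Act) : nat := length s.

Section HTSC.
Variable Act : Type.
Variable time : Act -> R.
Variable Poss : Act -> list Act -> Prop.
Variable start0 : R.

Local Notation start := (start time start0).

Definition Exec (s : list Act) : Prop :=
  forall a s', sqsubeq (do a s') s -> Poss a s' /\ start s' <= time a.

Definition slt (s s' : list Act) : Prop := sqsub s s' /\ Exec s'.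
Definition sle (s s' : list Act) : Prop := slt s s' \/ s = s'.

Definition CausesDir (a : Act) (ts : nat) (psi : list Act -> Prop) (s : list Act) : Prop :=
  exists sa, timeStamp sa = ts /\ slt S0 (do a sa) /\ sle (do a sa) s /\ ~ psi sa /\
    forall s', sle (do a sa) s' -> sle s' s -> psi s'.

(* End s' s e  :<->  end(s', s) = e  (end is a partial function, defined
   when s' = s or do(a,s') <= s; it is then single-valued) *)
Definition End (s' s : list Act) (e : R) : Prop :=
  (s' = s /\ e = start s') \/ (exists a, sle (do a s') s /\ e = time a).

(* phi : R -> situation -> Prop is phi[t,s] *)
Definition AchvSitAux (sphi : list Act) (phi : R -> list Act -> Prop) (s : list Act) : Prop :=
  (exists e, End sphi s e /\ phi e sphi) /\
  (forall s' t e, slt sphi s' -> sle s' s -> End s' s e ->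
      start s' <= t -> t <= e -> phi t s').

Definition AchvSit (sphi : list Act) (phi : R -> list Act -> Prop) (s : list Act) : Prop :=
  AchvSitAux sphi phi s /\ ~ (exists s'', slt s'' sphi /\ AchvSitAux s'' phi s).

(* CausesDir^prim_temp(a, ts, phi, s); gamma i are the contexts gamma^f_i of
   the state evolution axiom of the temporal fluent f constrained by phi. *)
Definition CausesDirPrimTemp (I : Type) (gamma : I -> list Act -> Prop)
  (a : Act) (ts : nat) (phi : R -> list Act -> Prop) (s : list Act) : Prop :=
  exists sphi, AchvSit sphi phi s /\ exists i, CausesDir a ts (gamma i) sphi.

End HTSC.

Definition effect {Act V : Type} (Phi : V -> Prop) (f : R -> list Act -> V)
  : R -> list Act -> Prop := fun t s => Phi (f t s).

Arguments Exec {Act}.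
Arguments slt {Act}.
Arguments sle {Act}.
Arguments CausesDir {Act}.
Arguments End {Act}.
Arguments AchvSitAux {Act}.
Arguments AchvSit {Act}.
Arguments CausesDirPrimTemp {Act} time Poss start0 {I}.

(* Main.v *)
Require Import Defs.
From Stdlib Require Import Reals List.
Import ListNotations.
Open Scope R_scope.


From Stdlib Require Import Lra Lia.

Definition suf {A : Type} (s s' : list A) : Prop := exists l, s' = l ++ s.

Lemma suf_len {A} (s s' : list A) : suf s s' -> (length s <= length s')%nat.
Proof. intros [l ->]. rewrite length_app. lia. Qed.

Lemma suf_eq {A} (s s' : list A) : suf s s' -> length s = length s' -> s = s'.
Proof. intros [l ->] H. rewrite length_app in H. destruct l; simpl in *; [reflexivity|lia]. Qed.

Lemma suf_trans {A} (a b c : list A) : suf a b -> suf b c -> suf a c.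
Proof. intros [l1 ->] [l2 ->]. exists (l2 ++ l1). now rewrite app_assoc. Qed.

Lemma suf_refl {A} (a : list A) : suf a a.
Proof. exists []. reflexivity. Qed.

Lemma sqsub_suf {A} (s s' : list A) : sqsub s s' -> suf s s' /\ (length s < length s')%nat.
Proof.
  induction 1 as [a s|a s s' H [[l Hl] Hlen]].
  - split; [exists [a]; reflexivity| simpl; lia].
  - split; [exists (a :: l); simpl; unfold do; rewrite Hl; reflexivity| simpl; lia].
Qed.

Lemma sqsub_app {A} (x : A) (l s : list A) : sqsub s (l ++ x :: s).
Proof.
  induction l as [|y l IH]; simpl.
  - apply (sqsub_do x s).
  - apply (sqsub_step y s (l ++ x :: s)). exact IH.
Qed.

Lemma suf_sqsub {A} (s s' : list A) : suf s s' -> (length s < length s')%nat -> sqsub s s'.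
Proof.
  intros [l ->] H. destruct l as [|y l'].
  - simpl in H; lia.
  - destruct (exists_last (l := y :: l') ltac:(discriminate)) as [l0 [x Hx]].
    rewrite Hx, <- app_assoc. simpl. apply sqsub_app.
Qed.

Lemma sqsubeq_suf {A} (s s' : list A) : sqsubeq s s' -> suf s s'.
Proof. intros [H| ->]; [apply (sqsub_suf _ _ H)|apply suf_refl]. Qed.

Lemma suf_sqsubeq {A} (s s' : list A) : suf s s' -> sqsubeq s s'.
Proof.
  intros H. destruct (Nat.eq_dec (length s) (length s')) as [E|E].
  - right. now apply suf_eq.
  - left. apply suf_sqsub; auto. pose proof (suf_len _ _ H). lia.
Qed.

Lemma suf_cmp {A} (l1 l2 s1 s2 : list A) : l1 ++ s1 = l2 ++ s2 ->
  (length s1 <= length s2)%nat -> suf s1 s2.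
Proof.
  revert l1. induction l2 as [|x l2 IH]; intros l1 E H; simpl in E.
  - exists l1. now rewrite E.
  - destruct l1 as [|y l1]; simpl in E.
    + subst s1. simpl in H. rewrite length_app in H. lia.
    + injection E as _ E. eapply IH; eauto.
Qed.

Lemma suf_cmp' {A} (s1 s2 s3 : list A) : suf s1 s3 -> suf s2 s3 ->
  (length s1 <= length s2)%nat -> suf s1 s2.
Proof. intros [l1 ->] [l2 E]. eapply suf_cmp; eauto. Qed.

Section Aux.
Lemma Exec_mono {Act} time Poss start0 (s s' : list Act) :
  Exec time Poss start0 s' -> suf s s' -> Exec time Poss start0 s.
Proof.
  intros HE Hs a s0 H. apply HE. apply suf_sqsubeq.
  eapply suf_trans; [apply sqsubeq_suf; exact H| exact Hs].
Qed.

Lemma sle_suf {Act} time Poss start0 (s s' : list Act) :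
  sle time Poss start0 s s' -> suf s s'.
Proof. intros [[H _]| ->]; [apply (sqsub_suf _ _ H)|apply suf_refl]. Qed.

Lemma L_sle {Act} time Poss start0 (s s' : list Act) :
  suf s s' -> Exec time Poss start0 s' -> sle time Poss start0 s s'.
Proof.
  intros H HE. destruct (suf_sqsubeq _ _ H) as [H1|H1].
  - left. split; auto.
  - right; auto.
Qed.

Lemma sle_Exec {Act} time Poss start0 (s s' : list Act) :
  sle time Poss start0 s s' -> Exec time Poss start0 s' -> Exec time Poss start0 s.
Proof. intros H HE. eapply Exec_mono; eauto. eapply sle_suf; eauto. Qed.

Lemma sle_trans {Act} time Poss start0 (a b c : list Act) :
  sle time Poss start0 a b -> sle time Poss start0 b c -> sle time Poss start0 a c.
Proof.
  intros H1 H2. destruct H2 as [[H2 HE]| <-]; [|exact H1].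
  apply L_sle; auto. eapply suf_trans; [eapply sle_suf; eauto|].
  apply (sqsub_suf _ _ H2).
Qed.
End Aux.

Theorem theorem5p6
  (Act : Type) (time : Act -> R) (Poss : Act -> list Act -> Prop) (start0 : R)
  (V : Type) (I : Type)
  (gamma : I -> list Act -> Prop)
  (delta : I -> V -> R -> list Act -> Prop)
  (f : R -> list Act -> V) (Phi : V -> Prop)
  (* contexts of the state evolution axiom are mutually exclusive *)
  (Hexcl : forall i j s, gamma i s -> gamma j s -> i = j)
  (* state evolution axiom of f *)
  (Hsea : forall t s y,
      f t s = y <->
      ((exists i, gamma i s /\ delta i y t s) \/
       (y = f (start time start0 s) s /\ ~ (exists i, gamma i s))))
  (* the causal setting: sigma = do([alpha1; ...; alphan], S0), n >= 1 *)
  (alpha1 : Act) (alphas : list Act)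
  (Hexec : Exec time Poss start0 (do_seq (alpha1 :: alphas) S0))
  (Hnot0 : ~ effect Phi f (start time start0 S0) S0)
  (Hnot1 : ~ effect Phi f (time alpha1) S0)
  (Hach : effect Phi f (start time start0 (do_seq (alpha1 :: alphas) S0))
                       (do_seq (alpha1 :: alphas) S0)) :
  forall (a : Act) (ts : nat) (sstar : list Act),
    CausesDirPrimTemp time Poss start0 gamma a ts (effect Phi f)
      (do_seq (alpha1 :: alphas) S0) ->
    sle time Poss start0 (do_seq (alpha1 :: alphas) S0) sstar ->
    (forall s' t' e,
        sle time Poss start0 (do_seq (alpha1 :: alphas) S0) s' ->
        sle time Poss start0 s' sstar ->
        End time Poss start0 s' sstar e ->
        start time start0 s' <= t' -> t' <= e ->
        effect Phi f t' s') ->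
    CausesDirPrimTemp time Poss start0 gamma a ts (effect Phi f) sstar.
Proof.
  set (sg := do_seq (alpha1 :: alphas) S0) in *. clearbody sg.
  clear Hexcl Hsea Hnot0 Hnot1.
  intros a ts sstar [sphi [[Haux Hmin] Hcd]] Hle Hhyp.
  exists sphi; split; [split|exact Hcd].
  all: destruct Hle as [Hlt| <-]; [|try exact Haux; try exact Hmin].
  all: destruct Hlt as [Hlt HEs]; destruct (sqsub_suf _ _ Hlt) as [Hsuf Hlen].
  all: assert (HEg : Exec time Poss start0 sg) by (eapply Exec_mono; eauto).
  all: assert (Hphisg : suf sphi sg) by (
    destruct Haux as [[e [[[-> _]|[b [Hb _]]] _]] _];
      [apply suf_refl| eapply suf_trans; [|eapply sle_suf; exact Hb]; exists [b]; reflexivity]).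
  - destruct Haux as [[e [HE Hphi]] Haux2]. split.
    + destruct HE as [[-> ->]|[b [Hb ->]]].
      * destruct Hsuf as [l Hl]. destruct l as [|y l'].
        { simpl in Hl. subst. lia. }
        destruct (exists_last (l := y :: l') ltac:(discriminate)) as [l0 [b Hb]].
        rewrite Hb, <- app_assoc in Hl. simpl in Hl.
        assert (Hbs : suf (b :: sg) sstar) by (exists l0; exact Hl).
        assert (Hsle : sle time Poss start0 (do b sg) sstar) by (apply L_sle; auto).
        exists (time b). split.
        { right. exists b. split; auto. }
        apply (Hhyp sg (time b) (time b)).
        { right; reflexivity. } { left; split; auto. }
        { right. exists b. split; auto. }
        { apply (HEs b sg). apply suf_sqsubeq. exact Hbs. }
        { lra. }
      * exists (time b). split; auto. right. exists b. split; auto.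
        apply L_sle; auto. eapply suf_trans; [eapply sle_suf; eauto| exact Hsuf].
    + intros s' t e' Hlt' Hle' HE' Ht1 Ht2.
      pose proof (sle_suf _ _ _ _ _ Hle') as Hs'.
      destruct (Nat.le_gt_cases (length sg) (length s')) as [Hc|Hc].
      * apply (Hhyp s' t e'); auto.
        apply L_sle; [eapply suf_cmp'; [exact Hsuf|exact Hs'|exact Hc]| exact (Exec_mono _ _ _ _ _ HEs Hs')].
      * assert (Hs'g : suf s' sg) by (eapply suf_cmp'; [exact Hs'|exact Hsuf|lia]).
        apply (Haux2 s' t e'); auto.
        { apply L_sle; auto. }
        destruct HE' as [[-> _]|[b [Hb ->]]].
        { pose proof (suf_len _ _ Hs'). lia. }
        right. exists b. split; auto. apply L_sle; auto.
        eapply suf_cmp'; [eapply sle_suf; exact Hb| exact Hsuf|]. simpl. lia.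
  - intros [s'' [Hs'' Haux'']]. apply Hmin. exists s''. split; auto.
    destruct Hs'' as [Hs'' _]. destruct (sqsub_suf _ _ Hs'') as [Hs''s Hlen''].
    pose proof (suf_len _ _ Hphisg).
    destruct Haux'' as [[e [HE Hphi]] Haux2]. split.
    + destruct HE as [[-> _]|[b [Hb ->]]]; [lia|].
      exists (time b). split; auto. right. exists b. split; auto.
      apply L_sle; auto. eapply suf_cmp'; [eapply sle_suf; exact Hb| exact Hsuf|]. simpl. lia.
    + intros s' t e' Hlt' Hle' HE' Ht1 Ht2.
      destruct HE' as [[-> ->]|[b [Hb ->]]].
      * assert (t = start time start0 sg) by lra. subst t. exact Hach.
      * apply (Haux2 s' t (time b)); auto.
        { eapply sle_trans; eauto. left; split; auto. }
        right. exists b. split; auto. eapply sle_trans; eauto. left; split; auto.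
Qed.
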